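(* Let $f:X\to\mathcal G$ be a convex function and $x,u\in X$. Then $$\bigcap_{z^*\in C^-\setminus\{0\}}f'_{z^*}(x,u)\supseteq f'(x,u),$$ and for all $z^*\in C^-\setminus\{0\}$: $\varphi'_{f,z^*}(x,u)\le\varphi_{f'(x,\cdot),z^*}(u)=\inf\{-z^*(z): z\in f'(x,u)\}$.
   Context: $X$ real linear space, $Z$ real locally convex Hausdorff space with dual $Z^*$, $C\subseteq Z$ closed convex cone, $0\in C$, $C^-=\{z^*:z^*(c)\le 0\ \forall c\in C\}$ with $C^-\setminus\{0\}\neq\emptyset$. $\mathcal G=\{A\subseteq Z: A=\operatorname{cl}\operatorname{co}(A+C)\}$; $A\oplus B=\operatorname{cl}\{a+b\}$, $tA=\{ta\}$ ($t>0$), $A\ominus B=\{z: B+\{z\}\subseteq A\}$. $f$ convex: $f(tx_1+(1-t)x_2)\supseteq tf(x_1)\oplus(1-t)f(x_2)$. For $g:X\to\mathcal G$, $g'(x,u)=\bigcap_{t_0>0}\operatorname{cl}\operatorname{co}\bigcup_{0<t<t_0}\frac1t\big(g(x+tu)\ominus g(x)\big)$. On $\overline{\mathbb R}$ use inf-addition $\dot+$ ($(-\infty)\dot+(+\infty)=+\infty$) and $r\ominus s=\inf\{t\in\mathbb R: r\le s\dot+t\}$ ($\inf\emptyset=+\infty$). $\varphi_{f,z^*}(x)=\inf\{-z^*(z):z\in f(x)\}$ ($+\infty$ if $f(x)=\emptyset$); $\varphi'_{f,z^*}(x,u)=\inf_{t>0}\frac1t\big(\varphi_{f,z^*}(x+tu)\ominus\varphi_{f,z^*}(x)\big)$.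 $f_{z^*}(x)=\{z\in Z: \varphi_{f,z^*}(x)\le -z^*(z)\}$ and $f'_{z^*}$ is the directional derivative of $f_{z^*}$. *)

(* Defs.v *)
From HB Require Import structures.
From mathcomp Require Import all_boot all_order all_algebra.
From mathcomp Require Import all_classical all_reals all_analysis.
Set Implicit Arguments. Unset Strict Implicit. Unset Printing Implicit Defensive.
Import Order.TTheory GRing.Theory Num.Theory.
Import numFieldNormedType.Exports.
Local Open Scope classical_set_scope.
Local Open Scope ring_scope.

Section SetValued.
Variable R : realType.

Definition cvx_set (M : lmodType R) (A : set M) : Prop :=
  forall x y (t : R), 0 <= t -> t <= 1 -> A x -> A y -> A (t *: x + (1 - t) *: y).

Definition co (M : lmodType R) (A : set M) : set M :=
  \bigcap_(B in [set B : set M | cvx_set B /\ A `<=` B]) B.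

Definition msum (M : lmodType R) (A B : set M) : set M :=
  [set a + b | a in A & b in B].

Variable Z : tvsType R.

Definition closed_convex_cone (C : set Z) : Prop :=
  closed C /\ cvx_set C /\ C 0 /\ (forall (t : R) c, 0 <= t -> C c -> C (t *: c)).

Definition dual_elt (zs : Z -> R) : Prop :=
  (forall (a : R) (x y : Z), zs (a *: x + y) = a * zs x + zs y) /\ continuous zs.

Definition negdual (C : set Z) (zs : Z -> R) : Prop :=
  dual_elt zs /\ (forall c, C c -> zs c <= 0).

Definition negdual0 (C : set Z) (zs : Z -> R) : Prop :=
  negdual C zs /\ zs <> (fun=> 0).

Definition inG (C : set Z) (A : set Z) : Prop := A = closure (co (msum A C)).

Definition oplus (A B : set Z) : set Z := closure (msum A B).

Definition sscale (t : R) (A : set Z) : set Z := [set t *: a | a in A].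

Definition ominus (A B : set Z) : set Z := [set z | forall b, B b -> A (b + z)].

Variable X : lmodType R.

Definition sv_convex (f : X -> set Z) : Prop :=
  forall (x1 x2 : X) (t : R), 0 < t -> t < 1 ->
    oplus (sscale t (f x1)) (sscale (1 - t) (f x2)) `<=` f (t *: x1 + (1 - t) *: x2).

Definition sv_dirder (g : X -> set Z) (x u : X) : set Z :=
  \bigcap_(t0 in [set t0 : R | 0 < t0])
    closure (co (\bigcup_(t in [set t : R | 0 < t < t0])
                   sscale t^-1 (ominus (g (x + t *: u)) (g x)))).

Definition eminus (r s : \bar R) : \bar R :=
  ereal_inf [set t%:E | t in [set t : R | (r <= dual_adde s t%:E)%E]].

(* phi_{f,z^*}(x) = inf { -z^*(z) : z in f(x) }  (+oo if f(x) empty) *)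
Definition phi (f : X -> set Z) (zs : Z -> R) (x : X) : \bar R :=
  ereal_inf [set (- zs z)%:E | z in f x].

Definition phi_dirder (f : X -> set Z) (zs : Z -> R) (x u : X) : \bar R :=
  ereal_inf [set ((t^-1)%:E * eminus (phi f zs (x + t *: u)) (phi f zs x))%E
            | t in [set t : R | 0 < t]].

Definition f_scal (f : X -> set Z) (zs : Z -> R) (x : X) : set Z :=
  [set z | (phi f zs x <= (- zs z)%:E)%E].

End SetValued.

(* Main.v *)
Require Import Defs.
From HB Require Import structures.
From mathcomp Require Import all_boot all_order all_algebra.
From mathcomp Require Import all_classical all_reals all_analysis.
From mathcomp Require Import lra.
Import Order.TTheory GRing.Theory Num.Theory.
Import numFieldNormedType.Exports.
Local Open Scope classical_set_scope.
Local Open Scope ring_scope.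

Section Aux.
Local Set Implicit Arguments.
Variables (R : realType) (X : lmodType R) (Z : tvsType R).

Lemma dadd_fin (a : \bar R) (b : R) : dual_adde a b%:E = (a + b%:E)%E.
Proof. by case: a. Qed.

Lemma co_mono (A B : set Z) : A `<=` B -> co A `<=` co B.
Proof. move=> AB w Hw S [cS BS]; apply: Hw; split=> //; exact: subset_trans AB BS. Qed.

Lemma co_sub (A S : set Z) : cvx_set S -> A `<=` S -> co A `<=` S.
Proof. by move=> cS AS w Hw; apply: Hw. Qed.

Lemma zs0 (zs : Z -> R) : dual_elt zs -> zs 0 = 0.
Proof.
move=> [h _]; have := h 1 0 0; rewrite scale1r addr0 mul1r => e.
have : zs 0 + zs 0 - zs 0 = zs 0 - zs 0 by rewrite -e.
by rewrite addrK subrr.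
Qed.

Lemma zsD (zs : Z -> R) a b : dual_elt zs -> zs (a + b) = zs a + zs b.
Proof. by move=> [h _]; have := h 1 a b; rewrite scale1r mul1r. Qed.

Lemma zsZ (zs : Z -> R) (a : R) b : dual_elt zs -> zs (a *: b) = a * zs b.
Proof.
move=> hz; have := hz.1 a b 0; rewrite !addr0 => ->; by rewrite zs0 // addr0.
Qed.

Lemma phi_shift (f : X -> set Z) zs x y v : dual_elt zs ->
  (forall b, f x b -> f y (b + v)) ->
  (phi f zs y <= phi f zs x + (- zs v)%:E)%E.
Proof.
move=> hz H.
have lb : forall b, f x b -> (phi f zs y <= (- zs b - zs v)%:E)%E.
  move=> b fb; rewrite -opprD -zsD //; apply: ereal_inf_lbound; by exists (b + v); [apply: H|].
case Py: (phi f zs y) => [p| |]; last by rewrite leNye.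
- have : ((p + zs v)%:E <= phi f zs x)%E.
    apply: le_ereal_inf_tmp => _ [b fb <-]; have := lb b fb; rewrite Py !lee_fin => h. lra.
  case: (phi f zs x) => [r| |] //.
    by rewrite -EFinD !lee_fin => h; lra.
  by move=> _; rewrite leey.
- have Hx : phi f zs x = +oo%E.
    apply/ereal_inf_pinfty => _ [b fb <-]; have := lb b fb; by rewrite Py.
  by rewrite Hx leey.
Qed.

Lemma lower_set (d : \bar R) (zs : Z -> R) : dual_elt zs ->
  closed [set w : Z | (d <= (- zs w)%:E)%E] /\ cvx_set [set w : Z | (d <= (- zs w)%:E)%E].
Proof.
case: d => [r| |] hz.
- split.
    rewrite (_ : [set w | _] = zs @^-1` [set y | y <= - r]).
      apply: (@preimage_closed _ R zs); [move=> w _; exact: (hz.2 w) | exact: closed_le].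
    by apply: funext => w /=; rewrite lee_fin lerNr.
  move=> w1 w2 t t0 t1; rewrite /= !lee_fin => h1 h2.
  rewrite zsD // !zsZ //; nra.
- split.
    rewrite (_ : [set w | _] = set0); first exact: closed0.
    by apply/seteqP; split=> w //=.
  by move=> w1 w2 t t0 t1 /=.
- split.
    rewrite (_ : [set w | _] = setT); first exact: closedT.
    by apply/seteqP; split=> w //= _; rewrite leNye.
  by move=> w1 w2 t t0 t1 /= _ _; rewrite leNye.
Qed.

Lemma dirder_mono (g h : X -> set Z) x u :
  (forall t : R, 0 < t -> ominus (g (x + t *: u)) (g x) `<=` ominus (h (x + t *: u)) (h x)) ->
  sv_dirder g x u `<=` sv_dirder h x u.
Proof.
move=> H z Hz t0 Ht0; apply: closureS (Hz t0 Ht0); apply: co_mono.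
move=> w [t Ht [v Hv <-]]; exists t => //; exists v => //.
by apply: H => //; case/andP: Ht.
Qed.

End Aux.

Theorem mainTheorem9 (R : realType) (X : lmodType R) (Z : tvsType R)
  (C : set Z) (f : X -> set Z) (x u : X) :
  hausdorff_space Z ->
  closed_convex_cone C ->
  (exists zs : Z -> R, negdual0 C zs) ->
  (forall y, inG C (f y)) ->
  sv_convex f ->
  sv_dirder f x u `<=`
    [set z | forall zs : Z -> R, negdual0 C zs -> sv_dirder (f_scal f zs) x u z]
  /\ (forall zs : Z -> R, negdual0 C zs ->
        (phi_dirder f zs x u <= phi (fun v => sv_dirder f x v) zs u)%E).
Proof.
move=> _ _ _ _ _; split.
  move=> z Hz zs [[hz _] _]; move: z Hz; apply: dirder_mono => t t0 v Hv b Hb.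
  rewrite /f_scal /= in Hb *.
  have hh := @phi_shift R X Z f zs x (x + t *: u) v hz Hv.
  apply: (le_trans hh).
  rewrite zsD // opprD EFinD.
  by apply: leeD2r.
move=> zs [[hz _] _].
set D := phi_dirder f zs x u.
apply: le_ereal_inf_tmp => _ [z Hz <-].
have [clS cvS] := lower_set D hz.
have HU : (\bigcup_(t in [set t : R | 0 < t < 1])
    sscale t^-1 (ominus (f (x + t *: u)) (f x))) `<=` [set w | (D <= (- zs w)%:E)%E].
  move=> _ [t /andP[t0 _] [v Hv <-]] /=.
  have h1 : (D <= (t^-1)%:E * eminus (phi f zs (x + t *: u)) (phi f zs x))%E.
    by apply: ereal_inf_lbound; exists t.
  apply: le_trans h1 _.
  have h2 : (eminus (phi f zs (x + t *: u)) (phi f zs x) <= (- zs v)%:E)%E.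
    apply: ereal_inf_lbound; exists (- zs v) => //=.
    rewrite dadd_fin.
    exact: phi_shift.
  apply: le_trans (lee_wpmul2l _ h2) _; first by rewrite lee_fin invr_ge0 ltW.
  by rewrite -EFinM zsZ // mulrN.
have : closure (co (\bigcup_(t in [set t : R | 0 < t < 1])
    sscale t^-1 (ominus (f (x + t *: u)) (f x)))) `<=` [set w | (D <= (- zs w)%:E)%E].
  move/closure_id: clS => ->; apply: closureS; exact: co_sub.
apply; apply: Hz; rewrite /=; exact: ltr01.
Qed.
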